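(* Let $X$ be a topological space in which every $\Lambda$-set is a $G_\delta$-set, and suppose that for each pair of disjoint $G_\delta$-sets $G_0,G_1$ in $X$ there exist $F_\sigma$-sets $F_0,F_1$ with $G_0\subseteq F_0$, $G_1\subseteq F_1$ and $F_0\cap F_1=\varnothing$. Let $g,f:X\to\mathbb{R}$ be functions such that $f$ is lower semi-Baire-one, $g$ is upper semi-Baire-one, and $g\le f$. Then there exists a Baire-one function $h:X\to\mathbb{R}$ such that $g\le h\le f$.
   Context: A $\Lambda$-set in $X$ is an intersection of open sets. A function $f:X\to\mathbb{R}$ is upper semi-Baire-one (resp. lower semi-Baire-one) if $f^{-1}(-\infty,t)$ (resp. $f^{-1}(t,+\infty)$) is an $F_\sigma$-set in $X$ for every real $t$. A function $h:X\to\mathbb{R}$ is Baire-one if the preimage of every open subset of $\mathbb{R}$ is an $F_\sigma$-set in $X$. $g\le f$ means $g(x)\le f(x)$ for all $x\in X$. *)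

(* Defs.v *)
From HB Require Import structures.
From mathcomp Require Import all_boot all_order all_algebra.
From mathcomp Require Import boolp classical_sets functions reals topology normedtype borel_hierarchy.
Set Implicit Arguments. Unset Strict Implicit. Unset Printing Implicit Defensive.
Import Order.TTheory GRing.Theory Num.Theory.
Import numFieldNormedType.Exports.
Local Open Scope classical_set_scope.
Local Open Scope ring_scope.

Definition Lambda_set {T : topologicalType} (A : set T) :=
  exists U : set (set T), (forall V, U V -> open V) /\ A = \bigcap_(V in U) V.

Definition upper_semi_Baire_one {T : topologicalType} {R : realType} (f : T -> R) :=
  forall t : R, Fsigma (f @^-1` [set x | x < t]).

Definition lower_semi_Baire_one {T : topologicalType} {R : realType} (f : T -> R) :=
  forall t : R, Fsigma (f @^-1` [set x | t < x]).

Definition Baire_one {T : topologicalType} {R : realType} (h : T -> R) :=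
  forall U : set R, open U -> Fsigma (h @^-1` U).

(* Main.v *)
Require Import Defs.
From HB Require Import structures.
From mathcomp Require Import all_boot all_order all_algebra.
From mathcomp Require Import boolp classical_sets functions reals topology normedtype borel_hierarchy.
From mathcomp Require Import lra.
Import Order.TTheory GRing.Theory Num.Theory.
Import numFieldNormedType.Exports.
Local Open Scope classical_set_scope.
Local Open Scope ring_scope.


Definition NN : Type := prod nat nat.
Section SetAlg.
Context {T : topologicalType}.

Definition pairF (G : nat -> nat -> set T) (d : set T) (k : nat) : set T :=
  if (unpickle k : option NN) is Some p then G p.1 p.2 else d.

Lemma Fsigma_bigcup (F : (nat -> set T)) : (forall n, Fsigma (F n)) -> Fsigma (\bigcup_n F n).
Proof.
move=> hF.
have /choice [G hG] : forall n, exists G : (nat -> set T), (forall i, closed (G i)) /\ F n = \bigcup_i G i.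
  by move=> n; have [G cG e] := hF n; exists G.
exists (pairF G set0).
  by move=> k; rewrite /pairF; case: unpickle => [[a b]|]; [exact: (proj1 (hG a)) | exact: closed0].
apply/seteqP; split => x.
  move=> [n _]; rewrite (proj2 (hG n)) => -[m _ Gx].
  by exists (pickle (n, m)) => //; rewrite /pairF pickleK.
move=> [k _]; rewrite /pairF; case: unpickle => [[a b]|] // Gx.
by exists a => //; rewrite (proj2 (hG a)); exists b.
Qed.

Lemma Fsigma_setI (A B : set T) : Fsigma A -> Fsigma B -> Fsigma (A `&` B).
Proof.
move=> [GA cA ->] [GB cB ->].
exists (pairF (fun a b => GA a `&` GB b) set0).
  by move=> k; rewrite /pairF; case: unpickle => [[a b]|]; [exact: closedI | exact: closed0].
apply/seteqP; split => x.
  move=> [[a _ Ax] [b _ Bx]].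
  by exists (pickle (a, b)) => //; rewrite /pairF pickleK.
move=> [k _]; rewrite /pairF; case: unpickle => [[a b]|] // [Ax Bx].
by split; [exists a|exists b].
Qed.

Lemma Gdelta_bigcap (F : (nat -> set T)) : (forall n, Gdelta (F n)) -> Gdelta (\bigcap_n F n).
Proof.
move=> hF.
have /choice [G hG] : forall n, exists G : (nat -> set T), (forall i, open (G i)) /\ F n = \bigcap_i G i.
  by move=> n; have [G cG e] := hF n; exists G.
exists (pairF G setT).
  by move=> k; rewrite /pairF; case: unpickle => [[a b]|]; [exact: (proj1 (hG a)) | exact: openT].
apply/seteqP; split => x.
  move=> Fx k _; rewrite /pairF; case: unpickle => [[a b]|] //.
  by have := Fx a I; rewrite (proj2 (hG a)); apply.
move=> Gx n _; rewrite (proj2 (hG n)) => m _.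
by have := Gx (pickle (n, m)) I; rewrite /pairF pickleK.
Qed.

Lemma Gdelta_setU (A B : set T) : Gdelta A -> Gdelta B -> Gdelta (A `|` B).
Proof.
move=> [GA cA ->] [GB cB ->].
exists (pairF (fun a b => GA a `|` GB b) setT).
  by move=> k; rewrite /pairF; case: unpickle => [[a b]|]; [exact: openU | exact: openT].
apply/seteqP; split => x.
  move=> ABx k _; rewrite /pairF; case: unpickle => [[a b]|] //.
  by case: ABx => H; [left; apply: H|right; apply: H].
move=> H; have [hA|hA] := pselect (forall a, GA a x).
  by left => a _; apply: hA.
move: hA => /existsNP [a nA]; right => b _.
have := H (pickle (a, b)) I; rewrite /pairF pickleK /=.
by case.
Qed.

Lemma Gdelta_FsigmaC {A : set T} : Gdelta A -> Fsigma (~` A).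
Proof.
move=> [G oG ->]; exists (fun i => ~` G i); first by move=> i; rewrite closedC.
by rewrite setC_bigcap.
Qed.

Lemma Fsigma_GdeltaC {A : set T} : Fsigma A -> Gdelta (~` A).
Proof.
move=> [G oG ->]; exists (fun i => ~` G i); first by move=> i; rewrite openC.
by rewrite setC_bigcup.
Qed.

End SetAlg.


Section Fin.
Context {T : topologicalType}.

Lemma Gdelta_finU (P : nat -> Prop) (G : nat -> set T) (n : nat) :
  (forall i, (i < n)%N -> P i -> Gdelta (G i)) ->
  Gdelta [set x | exists i, [/\ (i < n)%N, P i & G i x]].
Proof.
elim: n => [|n IH] hG.
  have -> : [set x | exists i, [/\ (i < 0)%N, P i & G i x]] = set0.
    by apply/seteqP; split => x // -[i []].
  exact/open_Gdelta/open0.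
have -> : [set x | exists i, [/\ (i < n.+1)%N, P i & G i x]] =
   [set x | exists i, [/\ (i < n)%N, P i & G i x]] `|` [set x | P n /\ G n x].
  apply/seteqP; split => x.
    move=> [i [ilt Pi Gi]]; rewrite ltnS leq_eqVlt in ilt.
    case/orP: ilt => [/eqP ein|ilt]; [right; subst i | left; exists i].
      by [].
    by [].
  case=> [[i [ilt Pi Gi]]|[Pn Gn]]; first by exists i; split => //; apply: ltnW.
  by exists n.
apply: Gdelta_setU; first by apply: IH => i ilt; apply: hG; apply: ltnW.
have [Pn|nPn] := pselect (P n).
  have -> : [set x | P n /\ G n x] = G n by apply/seteqP; split => x //= [].
  exact: hG.
have -> : [set x | P n /\ G n x] = set0 by apply/seteqP; split => x //= [].
exact/open_Gdelta/open0.
Qed.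

Lemma Fsigma_finI (P : nat -> Prop) (G : nat -> set T) (n : nat) :
  (forall i, (i < n)%N -> P i -> Fsigma (G i)) ->
  Fsigma [set x | forall i, (i < n)%N -> P i -> G i x].
Proof.
move=> hG.
have -> : [set x | forall i, (i < n)%N -> P i -> G i x] =
    ~` [set x | exists i, [/\ (i < n)%N, P i & (~` G i) x]].
  apply/seteqP; split => x /=.
    by move=> H [i [ilt Pi nG]]; apply: nG; apply: H.
  move=> H i ilt Pi; apply/not_notP => nG; by apply: H; exists i.
have := @Gdelta_finU P (fun i => ~` G i) n.
move=> /(_ _) H.
apply: Gdelta_FsigmaC.
by apply: H => i ilt Pi; apply: Fsigma_GdeltaC; apply: hG.
Qed.
End Fin.

Section Rays.
Context {T : topologicalType} {R : realType}.

Definition ratpair k : option (rat * rat) := unpickle k.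

Lemma rays_Baire (h : T -> R) :
  (forall t, Fsigma (h @^-1` [set x | x < t])) ->
  (forall t, Fsigma (h @^-1` [set x | t < x])) -> Baire_one h.
Proof.
move=> hlt hgt U oU.
pose E k : set T := if ratpair k is Some p then
   (if pselect (forall z : R, ratr p.1 < z < ratr p.2 -> U z) is left _ then
      h @^-1` [set x | ratr p.1 < x] `&` h @^-1` [set x | x < ratr p.2]
    else set0) else set0.
have -> : h @^-1` U = \bigcup_k E k.
  apply/seteqP; split => x /=.
    move=> Uhx; have := oU _ Uhx.
    rewrite -filter_from_ballE => -[e /= e0 He].
    have [a] : exists a : rat, ratr a \in `](h x - e), h x[.
      by apply: rat_in_itvoo; rewrite ltrBlDr ltrDl.
    rewrite in_itv /= => /andP [a1 a2].
    have [b] : exists b : rat, ratr b \in `](h x), h x + e[.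
      by apply: rat_in_itvoo; rewrite ltrDl.
    rewrite in_itv /= => /andP [b1 b2].
    exists (pickle (a, b)); first exact I.
    rewrite /E /ratpair pickleK /=.
    case: pselect => [_|]; first by split.
    case=> z /andP [az zb]; apply: He; rewrite /ball /=.
    rewrite ltr_norml; apply/andP; split.
      rewrite ltrNl opprB ltrBlDr; apply: (lt_trans zb); by rewrite addrC.
    rewrite ltrBlDr -ltrBlDl; exact: (lt_trans a1).
  move=> [k _]; rewrite /E; case: ratpair => [[a b]|] //=.
  case: pselect => //= HU [ax xb]; apply: HU; apply/andP; split => //.
apply: Fsigma_bigcup => k; rewrite /E; case: ratpair => [[a b]|] /=.
  case: pselect => _; first by apply: Fsigma_setI.
  exact/closed_Fsigma/closed0.
exact/closed_Fsigma/closed0.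
Qed.
End Rays.


Section Step1.
Context {X : topologicalType} {R : realType}.
Hypothesis hsep : forall G0 G1 : set X, Gdelta G0 -> Gdelta G1 -> G0 `&` G1 = set0 ->
     exists F0 F1 : set X, [/\ Fsigma F0, Fsigma F1, G0 `<=` F0, G1 `<=` F1
                              & F0 `&` F1 = set0].

Definition ispec (C D : set X) (UV : set X * set X) :=
  [/\ Fsigma UV.1, Gdelta UV.2, C `<=` UV.1, UV.1 `<=` UV.2 & UV.2 `<=` D].

Lemma interp_ex (C D : set X) : Gdelta C -> Fsigma D -> C `<=` D ->
  exists UV, ispec C D UV.
Proof.
move=> gC fD CD.
have CD0 : C `&` ~` D = set0.
  by apply/seteqP; split => x // [Cx nDx]; exact: nDx (CD _ Cx).
have [F0 [F1 [f0 f1 CF0 DF1 F01]]] := @hsep C (~` D) gC (Fsigma_GdeltaC fD) CD0.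
exists (F0, ~` F1); split => //=.
- exact: Fsigma_GdeltaC.
- move=> x F0x F1x; have : (F0 `&` F1) x by [].
  by rewrite F01.
- move=> x nF1x; apply/not_notP => nDx; exact: nF1x (DF1 _ nDx).
Qed.

Definition interp (C D : set X) : set X * set X :=
  match pselect (exists UV, ispec C D UV) with
  | left e => projT1 (cid e)
  | right _ => (set0, set0)
  end.

Lemma interpP C D : Gdelta C -> Fsigma D -> C `<=` D -> ispec C D (interp C D).
Proof.
move=> gC fD CD; rewrite /interp; case: pselect => [e|]; last first.
  by move=> n; exfalso; apply: n; apply: interp_ex.
exact: (projT2 (cid e)).
Qed.

Variables (f g : X -> R) (delta : R).
Hypothesis hf : lower_semi_Baire_one f.
Hypothesis hg : upper_semi_Baire_one g.
Hypothesis hgf : forall x, g x <= f x.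
Hypothesis d0 : 0 < delta.

Definition qn (n : nat) : R := ratr (odflt 0 (unpickle n : option rat)).
Lemma qn_pickle (q : rat) : qn (pickle q) = ratr q.
Proof. by rewrite /qn pickleK. Qed.

Definition Aset n : set X := [set x | f x <= qn n].
Definition Cset (W : nat -> set X * set X) n : set X :=
  Aset n `|` [set x | exists i, [/\ (i < n)%N, qn i < qn n & (W i).2 x]].
Definition Dset (W : nat -> set X * set X) n : set X :=
  g @^-1` [set y | y < qn n + delta] `&`
  [set x | forall i, (i < n)%N -> qn n < qn i -> (W i).1 x].

Fixpoint pref (n : nat) : nat -> set X * set X :=
  match n with
  | 0 => fun _ => (set0, set0)
  | m.+1 => fun k => if k == m then interp (Cset (pref m) m) (Dset (pref m) m)
                     else pref m k
  end.

Definition W n := pref n.+1 n.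

Lemma pref_W {m k : nat} : (k < m)%N -> pref m k = W k.
Proof.
elim: m => // m IH; rewrite ltnS leq_eqVlt => /orP [/eqP ->|km] //=.
by rewrite (ltn_eqF km); apply: IH.
Qed.

Lemma WE n : W n = interp (Cset W n) (Dset W n).
Proof.
rewrite /W /= eqxx; congr interp.
  rewrite /Cset; apply/seteqP; split => x [Ax|[i [ilt qi Wi]]]; (try by left);
    right; exists i; split => //; by move: Wi; rewrite (pref_W ilt).
rewrite /Dset; apply/seteqP; split => x [gx H]; split => // i ilt qi.
  by have := H i ilt qi; rewrite (pref_W ilt).
by have := H i ilt qi; rewrite (pref_W ilt).
Qed.

Lemma Aset_G n : Gdelta (Aset n).
Proof.
have -> : Aset n = ~` (f @^-1` [set y | qn n < y]).
  apply/seteqP; split => x /=; first by move=> H; apply/negP; rewrite -leNgt.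
  by move=> /negP; rewrite -leNgt.
exact/Fsigma_GdeltaC/hf.
Qed.

Lemma chain_of {i j : nat} : ispec (Cset W i) (Dset W i) (W i) ->
  ispec (Cset W j) (Dset W j) (W j) -> qn i < qn j -> (W i).2 `<=` (W j).1.
Proof.
move=> [_ _ _ _ Di] [_ _ Cj _ _] qij x Wix.
have [ij|ji|eij] := ltngtP i j.
- by apply: Cj; right; exists i.
- by have [_] := Di x Wix; apply.
- by move: qij; rewrite eij ltxx.
Qed.

Lemma Wspec n : ispec (Cset W n) (Dset W n) (W n).
Proof.
elim/ltn_ind: n => n IH; rewrite [X in ispec _ _ X]WE; apply: interpP.
- apply: Gdelta_setU; first exact: Aset_G.
  by apply: (@Gdelta_finU _ (fun i => qn i < qn n) (fun i => (W i).2)) => i ilt _; have [] := IH i ilt.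
- apply: Fsigma_setI; first exact: hg.
  by apply: (@Fsigma_finI _ (fun i => qn n < qn i) (fun i => (W i).1)) => i ilt _; have [] := IH i ilt.
move=> x [Ax|[i [ilt qi Wix]]]; split.
- by rewrite /= (le_lt_trans (hgf x)) // (le_lt_trans Ax) // ltrDl.
- move=> j jlt qj; have [_ _ Cj _ _] := IH j jlt; apply: Cj; left.
  by rewrite /Aset /= (le_trans Ax) // ltW.
- have [_ _ _ _ Di] := IH i ilt; have [/= gx _] := Di x Wix.
  by rewrite /= (lt_trans gx) // ltrD2r.
- move=> j jlt qj.
  exact: (@chain_of i j (IH i ilt) (IH j jlt) (lt_trans qi qj) x Wix).
Qed.

Lemma chain {i j : nat} : qn i < qn j -> (W i).2 `<=` (W j).1.
Proof. exact: chain_of (Wspec i) (Wspec j). Qed.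

Definition Sx x : set R := [set r | exists n, r = qn n /\ (W n).1 x].
Definition hh x : R := inf (Sx x).

Lemma Sx_lb x r : Sx x r -> g x - delta < r.
Proof.
move=> [n [-> W1]]; have [_ _ _ W12 W2D] := Wspec n.
have [/= gx _] := W2D x (W12 x W1).
by rewrite ltrBlDr.
Qed.

Lemma Sx_rat x (q : rat) : f x <= ratr q -> Sx x (ratr q).
Proof.
move=> fq; exists (pickle q); rewrite qn_pickle; split => //.
have [_ _ C _ _] := Wspec (pickle q); apply: C; left.
by rewrite /Aset /= qn_pickle.
Qed.

Lemma Sx_ne x : Sx x !=set0.
Proof.
have [q] : exists q : rat, ratr q \in `](f x), f x + 1[.
  by apply: rat_in_itvoo; rewrite ltrDl.
rewrite in_itv /= => /andP [q1 _]; exists (ratr q); apply: Sx_rat; exact: ltW.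
Qed.

Lemma Sx_hlb x : has_lbound (Sx x).
Proof. by exists (g x - delta) => r /Sx_lb /ltW. Qed.

Lemma hh_le_f x : hh x <= f x.
Proof.
rewrite leNgt; apply/negP => fh.
have [q] := rat_in_itvoo fh; rewrite in_itv /= => /andP [q1 q2].
have := ge_inf (Sx_hlb x) (@Sx_rat x q (ltW q1)).
by rewrite leNgt q2.
Qed.

Lemma g_le_hh x : g x - delta <= hh x.
Proof. by apply: lb_le_inf; [exact: Sx_ne | move=> r /Sx_lb /ltW]. Qed.

Lemma hh_Baire : Baire_one hh.
Proof.
apply: rays_Baire => t.
  have -> : hh @^-1` [set y | y < t] =
      \bigcup_n (if qn n < t then (W n).1 else set0).
    apply/seteqP; split => x /=.
      move=> /(inf_lt (Sx_ne x)) [r [n [-> W1]] rt].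
      by exists n => //; rewrite rt.
    move=> [n _]; case: ifP => // qt W1.
    apply: le_lt_trans qt; apply: ge_inf; first exact: Sx_hlb.
    by exists n.
  apply: Fsigma_bigcup => n; case: ifP => _; first by have [] := Wspec n.
  exact/closed_Fsigma/closed0.
have -> : hh @^-1` [set y | t < y] =
    \bigcup_n (if t < qn n then ~` (W n).2 else set0).
  apply/seteqP; split => x /=.
    move=> th.
    have [a] := rat_in_itvoo th; rewrite in_itv /= => /andP [a1 a2].
    have [b] := rat_in_itvoo a2; rewrite in_itv /= => /andP [b1 b2].
    exists (pickle a); first exact I.
    rewrite qn_pickle a1 => W2.
    have W1 : (W (pickle b)).1 x.
      by apply: (chain (i := pickle a)) => //; rewrite !qn_pickle.
    have : hh x <= ratr b.
      by apply: ge_inf; [exact: Sx_hlb | exists (pickle b); rewrite qn_pickle].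
    by rewrite leNgt b2.
  move=> [n _]; case: ifP => // tq nW2.
  apply: (lt_le_trans tq); apply: lb_le_inf; first exact: Sx_ne.
  move=> r [m [-> W1]]; rewrite leNgt; apply/negP => qmn.
  apply: nW2; have [_ _ _ W12 _] := Wspec m.
  have [_ _ _ W12n _] := Wspec n.
  exact/W12n/(chain qmn)/W12.
apply: Fsigma_bigcup => n; case: ifP => _.
  by apply: Gdelta_FsigmaC; have [] := Wspec n.
exact/closed_Fsigma/closed0.
Qed.

End Step1.


Lemma dn_small (R : archiFieldType) (e : R) : 0 < e -> exists n : nat, (n.+1%:R)^-1 < e.
Proof.
move=> e0; exists (Num.Def.archi_bound e^-1).
have := @archi_boundP R e^-1 (ltW (eq_ind_r is_true e0 (invr_gt0 e))).
set n := Num.Def.archi_bound _ => h.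
rewrite invf_plt ?posrE //; apply: (lt_trans h); by rewrite ltr_nat.
Qed.

Section Step2.
Context {X : topologicalType} {R : realType}.
Hypothesis hsep : forall G0 G1 : set X, Gdelta G0 -> Gdelta G1 -> G0 `&` G1 = set0 ->
     exists F0 F1 : set X, [/\ Fsigma F0, Fsigma F1, G0 `<=` F0, G1 `<=` F1
                              & F0 `&` F1 = set0].

Definition dn (n : nat) : R := (n.+1%:R)^-1.
Lemma dn_gt0 n : 0 < dn n.
Proof. by rewrite /dn invr_gt0 ltr0n. Qed.

Definition okp (lo up : X -> R) :=
  [/\ upper_semi_Baire_one lo, lower_semi_Baire_one up & forall x, lo x <= up x].

Definition hspec n (lo up h : X -> R) :=
  Baire_one h /\ forall x, lo x - dn n <= h x /\ h x <= up x.

Definition hstep n (lo up : X -> R) : X -> R :=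
  match pselect (exists h, hspec n lo up h) with
  | left e => projT1 (cid e)
  | right _ => fun _ => 0
  end.

Lemma hstepP n lo up : okp lo up -> hspec n lo up (hstep n lo up).
Proof.
move=> [hl hu hlu]; rewrite /hstep; case: pselect => [e|]; first exact: (projT2 (cid e)).
move=> nE; exfalso; apply: nE; exists (hh up lo (dn n)); split.
  exact: (hh_Baire hsep up lo (dn n) hu hl hlu (dn_gt0 n)).
move=> x; split; first exact: (g_le_hh hsep up lo (dn n) hu hl hlu (dn_gt0 n)).
exact: (hh_le_f hsep up lo (dn n) hu hl hlu (dn_gt0 n)).
Qed.

Variables (f g : X -> R).
Hypothesis hf : lower_semi_Baire_one f.
Hypothesis hg : upper_semi_Baire_one g.
Hypothesis hgf : forall x, g x <= f x.

Fixpoint seqs (n : nat) : (X -> R) * (X -> R) :=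
  match n with
  | 0 => (g, f)
  | m.+1 => let lo := (seqs m).1 in let up := (seqs m).2 in
            let h := hstep m lo up in
            (fun x => Num.max (lo x) (h x - dn m), fun x => Num.min (up x) (h x + dn m))
  end.

Definition lo n := (seqs n).1.
Definition up n := (seqs n).2.
Definition H n := hstep n (lo n) (up n).

Lemma lt_pre (h : X -> R) t : Baire_one h -> Fsigma (h @^-1` [set y | y < t]).
Proof. by move=> hB; apply: hB; apply: open_lt. Qed.
Lemma gt_pre (h : X -> R) t : Baire_one h -> Fsigma (h @^-1` [set y | t < y]).
Proof. by move=> hB; apply: hB; apply: open_gt. Qed.

Lemma ok_seqs n : okp (lo n) (up n).
Proof.
elim: n => [|n [hl hu hlu]]; first by split.
have [hB hb] := @hstepP n (lo n) (up n) (And3 hl hu hlu).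
rewrite /lo /up /=; split.
- move=> t.
  have -> : (fun x => Num.max ((seqs n).1 x) (hstep n (seqs n).1 (seqs n).2 x - dn n))
      @^-1` [set y | y < t] =
      (lo n) @^-1` [set y | y < t] `&` (H n) @^-1` [set y | y < t + dn n].
    by apply/seteqP; split => x /=; rewrite gt_max ltrBlDr => /andP.
  by apply: Fsigma_setI; [apply: hl | apply: lt_pre].
- move=> t.
  have -> : (fun x => Num.min ((seqs n).2 x) (hstep n (seqs n).1 (seqs n).2 x + dn n))
      @^-1` [set y | t < y] =
      (up n) @^-1` [set y | t < y] `&` (H n) @^-1` [set y | t - dn n < y].
    by apply/seteqP; split => x /=; rewrite lt_min ltrBlDr => /andP.
  by apply: Fsigma_setI; [apply: hu | apply: gt_pre].
- move=> x; have [h1 h2] := hb x.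
  have d0 := ltW (dn_gt0 n).
  rewrite ge_max !le_min; apply/and3P; split; [apply/andP; split | |].
  - exact: hlu.
  - by rewrite -lerBlDr; exact: h1.
  - by apply: (le_trans _ h2); rewrite lerBlDr lerDl.
  - by apply: (le_trans (y := H n x)); [rewrite lerBlDr lerDl | rewrite lerDl].
Qed.
Lemma lo_S n x : lo n x <= lo n.+1 x.
Proof. by rewrite /lo /= le_max lexx. Qed.
Lemma up_S n x : up n.+1 x <= up n x.
Proof. by rewrite /up /= ge_min lexx. Qed.

Lemma lo_mono n m x : (n <= m)%N -> lo n x <= lo m x.
Proof.
move=> /subnK <-; elim: (m - n)%N => [|k IH]; first by rewrite add0n.
by rewrite addSn; exact: le_trans IH (lo_S _ _).
Qed.
Lemma up_mono n m x : (n <= m)%N -> up m x <= up n x.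
Proof.
move=> /subnK <-; elim: (m - n)%N => [|k IH]; first by rewrite add0n.
by rewrite addSn; exact: le_trans (up_S _ _) IH.
Qed.

Lemma lo_up n m x : lo n x <= up m x.
Proof.
have [_ _ hlu] := ok_seqs (maxn n m).
apply: (le_trans (@lo_mono n (maxn n m) x (leq_maxl n m))).
apply: (le_trans (hlu x)); exact: (@up_mono m (maxn n m) x (leq_maxr n m)).
Qed.

Definition Es x : set R := [set y | exists n, y = lo n x].
Definition Hf x : R := sup (Es x).

Lemma Es_ne x : Es x !=set0.
Proof. by exists (lo 0 x), 0%N. Qed.

Lemma Es_ub x : has_ubound (Es x).
Proof. by exists (up 0 x) => y [n ->]; apply: lo_up. Qed.

Lemma lo_le_Hf n x : lo n x <= Hf x.
Proof. by apply: ub_le_sup; [exact: Es_ub | exists n]. Qed.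

Lemma Hf_le_up n x : Hf x <= up n x.
Proof. by apply: ge_sup; [exact: Es_ne | move=> y [m ->]; apply: lo_up]. Qed.

Lemma Hf_near n x : H n x - dn n <= Hf x /\ Hf x <= H n x + dn n.
Proof.
split.
  apply: le_trans (lo_le_Hf n.+1 x); by rewrite /lo /= le_max lexx orbT.
apply: le_trans (Hf_le_up n.+1 x) _; by rewrite /up /= ge_min lexx orbT.
Qed.

Lemma HB n : Baire_one (H n).
Proof. by have [] := @hstepP n (lo n) (up n) (ok_seqs n). Qed.

Lemma Hf_Baire : Baire_one Hf.
Proof.
apply: rays_Baire => t.
  have -> : Hf @^-1` [set y | y < t] = \bigcup_n (H n) @^-1` [set y | y < t - dn n].
    apply/seteqP; split => x /=.
      move=> ht.
      have [n hn] : exists n : nat, dn n < (t - Hf x) / 2.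
        by apply: dn_small; lra.
      exists n => //=; have [h1 _] := Hf_near n x; lra.
    move=> [n _ /=]; have [_ h2] := Hf_near n x; lra.
  by apply: Fsigma_bigcup => n; apply: lt_pre; apply: HB.
have -> : Hf @^-1` [set y | t < y] = \bigcup_n (H n) @^-1` [set y | t + dn n < y].
  apply/seteqP; split => x /=.
    move=> ht.
    have [n hn] : exists n : nat, dn n < (Hf x - t) / 2.
      by apply: dn_small; lra.
    exists n => //=; have [_ h2] := Hf_near n x; lra.
  move=> [n _ /=]; have [h1 _] := Hf_near n x; lra.
by apply: Fsigma_bigcup => n; apply: gt_pre; apply: HB.
Qed.

Lemma final_ex : exists h : X -> R, Baire_one h /\ (forall x, g x <= h x /\ h x <= f x).
Proof.
exists Hf; split; first exact: Hf_Baire.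
by move=> x; split; [exact: (lo_le_Hf 0) | exact: (Hf_le_up 0)].
Qed.
End Step2.

Theorem corollary3 (X : topologicalType) (R : realType)
  (hLam : forall A : set X, Lambda_set A -> Gdelta A)
  (hsep : forall G0 G1 : set X, Gdelta G0 -> Gdelta G1 -> G0 `&` G1 = set0 ->
     exists F0 F1 : set X, [/\ Fsigma F0, Fsigma F1, G0 `<=` F0, G1 `<=` F1
                              & F0 `&` F1 = set0])
  (g f : X -> R)
  (hf : lower_semi_Baire_one f) (hg : upper_semi_Baire_one g)
  (hgf : forall x, g x <= f x) :
  exists h : X -> R, Baire_one h /\ (forall x, g x <= h x /\ h x <= f x).
Proof.
exact: (@final_ex X R hsep f g hf hg hgf).
Qed.
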